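(* Let $k$ be an algebraically closed field, $\Lambda$ a connected locally bounded $k$-category, and $G$ a group of $k$-linear automorphisms of $\Lambda$ which acts freely on $[\mathrm{ind}\Lambda]$. Let $L$ be a line in $\Lambda$ and $B_L$ its associated $\Lambda$-module. If $B_L$ is weakly-$G$-periodic, then $G_{B_L}\cong\mathbb{Z}$.
   Context: A locally bounded $k$-category: endomorphism algebras local, distinct objects non-isomorphic, and for each object $x$, $\sum_y\dim_k\Lambda(x,y)<\infty$, $\sum_y\dim_k\Lambda(y,x)<\infty$. A $\Lambda$-module is a contravariant $k$-linear functor $\Lambda\to\mathrm{MOD}\,k$; $\mathrm{supp}M$ is the full subcategory of objects $x$ with $M(x)\neq0$. $[\mathrm{ind}\Lambda]$ is the set of isomorphism classes of finite dimensional indecomposable $\Lambda$-modules; for $g\in G$, ${}^gM=M\circ g^{-1}$; $G$ acts freely on $[\mathrm{ind}\Lambda]$ if ${}^gM\not\cong M$ for every indecomposable finite dimensional $M$ and $1\neq g\in G$ (this implies $G$ acts freely on the objects of $\Lambda$). A full subcategory $L$ is convex if each path in the ordinary quiver of $\Lambda$ with source and terminal in $L$ has all its points in $L$. A line is a convex full subcategory isomorphic to the path category of a linear quiver (of type $A_n$, $A_\infty$ or $A_\infty^\infty$). For a line $L$, $B_L$ is the $\Lambda$-module with $B_L(x)=k$ for $x\in L$, $B_L(\alpha)\neq0$ for every nonzero morphism $\alpha$ of $L$, and $B_L(x)=0$ for $x\notin L$. $G_M=\{g\in G\mid {}^gM\cong M\}$. A locally finite dimensional indecomposable $\Lambda$-module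 $Y$ (i.e. $\dim_kY(x)<\infty$ for all $x$) is weakly-$G$-periodic if $\mathrm{supp}Y$ is infinite and $(\mathrm{supp}Y)/G_Y$ is finite. *)

(* Defs.v *)
From HB Require Import structures.
From mathcomp Require Import all_boot all_order all_algebra.
From Stdlib Require List Relations.
Set Implicit Arguments.
Unset Strict Implicit.
Unset Printing Implicit Defensive.
Import Order.TTheory GRing.Theory Num.Theory.
Local Open Scope ring_scope.

Record kcat (k : fieldType) := KCat {
  Ob : Type;
  Hom : Ob -> Ob -> vectType k;
  idm : forall x, Hom x x;
  comp : forall x y z, Hom y z -> Hom x y -> Hom x z;
  comp_linl : forall x y z (a : k) (g g' : Hom y z) (f : Hom x y),
      comp (a *: g + g') f = a *: comp g f + comp g' f;
  comp_linr : forall x y z (a : k) (g : Hom y z) (f f' : Hom x y),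
      comp g (a *: f + f') = a *: comp g f + comp g f';
  compA : forall x y z w (h : Hom z w) (g : Hom y z) (f : Hom x y),
      comp h (comp g f) = comp (comp h g) f;
  comp1m : forall x y (f : Hom x y), comp (idm y) f = f;
  compm1 : forall x y (f : Hom x y), comp f (idm x) = f
}.
Arguments comp {k} _ {x y z}.
Arguments idm {k} _ _.
Arguments Hom {k} _ _ _.
Arguments Ob {k} _.

Section Cat.
Variables (k : fieldType) (C : kcat k).

Definition nontrivial (V : lmodType k) : Prop := exists v : V, v <> 0.

Definition invertible x y (f : Hom C x y) : Prop :=
  exists g : Hom C y x, comp C g f = idm C x /\ comp C f g = idm C y.

Definition local_end (x : Ob C) : Prop :=
  idm C x <> 0 /\
  forall f g : Hom C x x, ~ invertible f -> ~ invertible g -> ~ invertible (f + g).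

Definition locally_bounded : Prop :=
  (forall x, local_end x) /\
  (forall x y : Ob C, x <> y -> forall f : Hom C x y, ~ invertible f) /\
  (forall x, exists s : seq (Ob C),
      forall y, (nontrivial (Hom C x y) \/ nontrivial (Hom C y x)) -> List.In y s).

Definition hom_rel (x y : Ob C) : Prop :=
  nontrivial (Hom C x y) \/ nontrivial (Hom C y x).

Definition connected_cat : Prop :=
  forall x y : Ob C, Relation_Operators.clos_refl_trans (Ob C) hom_rel x y.

Definition rad x y (f : Hom C x y) : Prop :=
  forall g : Hom C y x, invertible (idm C x - comp C g f).

Definition rad2 x y (h : Hom C x y) : Prop :=
  exists (n : nat) (zs : 'I_n -> Ob C) (fs : forall i, Hom C x (zs i))
         (gs : forall i, Hom C (zs i) y),
    (forall i, rad (fs i) /\ rad (gs i)) /\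
    h = \sum_(i < n) comp C (gs i) (fs i).

(* arrows of the ordinary quiver: (rad / rad^2)(x,y) <> 0 *)
Definition quiver_arrow (x y : Ob C) : Prop :=
  exists h : Hom C x y, rad h /\ ~ rad2 h.

(* full subcategories are given by predicates on objects *)
Definition convex (L : Ob C -> Prop) : Prop :=
  forall (n : nat) (p : nat -> Ob C),
    (forall i, (i < n)%N -> quiver_arrow (p i) (p i.+1)) ->
    L (p 0%N) -> L (p n) -> forall i, (i <= n)%N -> L (p i).

(* vertex sets of linear quivers of type A_n (n >= 1), A_oo, A_oo^oo *)
Definition linear_vertex_set (I : int -> Prop) : Prop :=
  (exists n : nat, (0 < n)%N /\ forall i, I i <-> ((0 <= i) && (i < n%:Z))) \/
  (forall i, I i <-> (0 <= i)) \/
  (forall i, I i).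

(* in the linear quiver with orientation [o] (o t = true : t -> t+1,
   o t = false : t+1 -> t), there is a (unique) path from i to j *)
Definition lpath (o : int -> bool) (i j : int) : Prop :=
  ((i <= j) /\ forall t, i <= t -> t < j -> o t = true) \/
  ((j <= i) /\ forall t, j <= t -> t < i -> o t = false).

(* L is a line: a convex full subcategory isomorphic to the path category
   of a linear quiver.  The isomorphism sends the vertex i to phi i and the
   unique path i ~> j to e i j; it is a linear bijection on Hom spaces
   (Hom(phi i, phi j) = k e_ij if there is a path, 0 otherwise) and a
   functor (identities, composition of paths). *)
Definition is_line (L : Ob C -> Prop) : Prop :=
  convex L /\
  exists (I : int -> Prop) (phi : int -> Ob C) (o : int -> bool)
         (e : forall i j, Hom C (phi i) (phi j)),
    linear_vertex_set I /\
    (forall i j, I i -> I j -> phi i = phi j -> i = j) /\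
    (forall x, L x <-> exists i, I i /\ phi i = x) /\
    (forall i j, I i -> I j -> lpath o i j ->
        e i j <> 0 /\ forall f : Hom C (phi i) (phi j), exists a : k, f = a *: e i j) /\
    (forall i j, I i -> I j -> ~ lpath o i j ->
        forall f : Hom C (phi i) (phi j), f = 0) /\
    (forall i, I i -> e i i = idm C (phi i)) /\
    (forall i j l, I i -> I j -> I l -> lpath o i j -> lpath o j l ->
        comp C (e j l) (e i j) = e i l).

Record kfun := KFun {
  fob : Ob C -> Ob C;
  fhom : forall x y, Hom C x y -> Hom C (fob x) (fob y)
}.
Arguments fob _ _.
Arguments fhom _ {x y}.

Definition kfid : kfun := @KFun (fun x => x) (fun x y f => f).
Definition kfcomp (F F' : kfun) : kfun :=
  @KFun (fun x => fob F (fob F' x)) (fun x y f => fhom F (fhom F' f)).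

Definition is_kfunctor (F : kfun) : Prop :=
  (forall x y (a : k) (f g : Hom C x y),
      fhom F (a *: f + g) = a *: fhom F f + fhom F g) /\
  (forall x, fhom F (idm C x) = idm C (fob F x)) /\
  (forall x y z (g : Hom C y z) (f : Hom C x y),
      fhom F (comp C g f) = comp C (fhom F g) (fhom F f)).

Definition kfinverse (F F' : kfun) : Prop :=
  kfcomp F F' = kfid /\ kfcomp F' F = kfid.

Definition auto_group (G : kfun -> Prop) : Prop :=
  G kfid /\
  (forall F F', G F -> G F' -> G (kfcomp F F')) /\
  (forall F, G F -> exists F', G F' /\ kfinverse F F') /\
  (forall F, G F -> is_kfunctor F).

(* Modules: contravariant k-linear functors C -> MOD k                 *)
Record kmod := KMod {
  mob : Ob C -> lmodType k;
  mmap : forall x y, Hom C x y -> mob y -> mob x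
}.
Arguments mob _ _.
Arguments mmap _ {x y}.

Definition is_kmod (M : kmod) : Prop :=
  (forall x y (f : Hom C x y) (a : k) (u v : mob M y),
      mmap M f (a *: u + v) = a *: mmap M f u + mmap M f v) /\
  (forall x y (a : k) (f g : Hom C x y) (u : mob M y),
      mmap M (a *: f + g) u = a *: mmap M f u + mmap M g u) /\
  (forall x (u : mob M x), mmap M (idm C x) u = u) /\
  (forall x y z (g : Hom C y z) (f : Hom C x y) (u : mob M z),
      mmap M (comp C g f) u = mmap M f (mmap M g u)).

Definition fin_dim (V : lmodType k) : Prop :=
  exists s : seq V, forall v : V,
    exists c : 'I_(size s) -> k, v = \sum_(i < size s) c i *: s`_i.

Definition dim_one (V : lmodType k) : Prop :=
  exists v : V, v <> 0 /\ forall u : V, exists a : k, u = a *: v.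

Definition supp (M : kmod) (x : Ob C) : Prop := nontrivial (mob M x).

Definition locally_fin_dim (M : kmod) : Prop := forall x, fin_dim (mob M x).

Definition fin_dim_mod (M : kmod) : Prop :=
  locally_fin_dim M /\ exists s : seq (Ob C), forall x, supp M x -> List.In x s.

Definition is_natural (M N : kmod) (phi : forall x, mob M x -> mob N x) : Prop :=
  (forall x (a : k) (u v : mob M x), phi x (a *: u + v) = a *: phi x u + phi x v) /\
  (forall x y (f : Hom C x y) (u : mob M y), phi x (mmap M f u) = mmap N f (phi y u)).

Definition mod_iso (M N : kmod) : Prop :=
  exists phi : forall x, mob M x -> mob N x,
    is_natural phi /\ forall x, bijective (phi x).

Definition indecomposable (M : kmod) : Prop :=
  (exists x, supp M x) /\
  forall e : forall x, mob M x -> mob M x,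
    is_natural e -> (forall x u, e x (e x u) = e x u) ->
    (forall x u, e x u = 0) \/ (forall x u, e x u = u).

(* M o F ; for F = g^{-1} this is the module  ^g M = M o g^{-1} *)
Definition twist (M : kmod) (F : kfun) : kmod :=
  @KMod (fun x => mob M (fob F x)) (fun x y f => mmap M (fhom F f)).

Definition fixes_iso (M : kmod) (g : kfun) : Prop :=
  exists g', kfinverse g g' /\ mod_iso (twist M g') M.

Definition acts_freely (G : kfun -> Prop) : Prop :=
  forall M, is_kmod M -> fin_dim_mod M -> indecomposable M ->
    forall g, G g -> g <> kfid -> ~ fixes_iso M g.

Definition stab (G : kfun -> Prop) (M : kmod) (g : kfun) : Prop :=
  G g /\ fixes_iso M g.

Definition weakly_G_periodic (G : kfun -> Prop) (Y : kmod) : Prop :=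
  is_kmod Y /\ locally_fin_dim Y /\ indecomposable Y /\
  (~ exists s : seq (Ob C), forall x, supp Y x -> List.In x s) /\
  (exists s : seq (Ob C), forall x, supp Y x ->
      exists y, List.In y s /\ exists g, stab G Y g /\ fob g y = x).

Definition is_B_of_line (L : Ob C -> Prop) (B : kmod) : Prop :=
  is_kmod B /\
  (forall x, L x -> dim_one (mob B x)) /\
  (forall x, ~ L x -> forall u : mob B x, u = 0) /\
  (forall x y (a : Hom C x y), L x -> L y -> a <> 0 ->
      exists u : mob B y, mmap B a u <> 0).

Definition kfpow (h h' : kfun) (n : int) : kfun :=
  match n with
  | Posz m => iter m (kfcomp h) kfid
  | Negz m => iter m.+1 (kfcomp h') kfid
  end.

Definition iso_to_Z (H : kfun -> Prop) : Prop :=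
  exists h h', H h /\ kfinverse h h' /\
    (forall n m : int, kfpow h h' n = kfpow h h' m -> n = m) /\
    (forall n : int, H (kfpow h h' n)) /\
    (forall g, H g -> exists n : int, g = kfpow h h' n).

End Cat.

(* Main.v *)
Require Import Defs.
From HB Require Import structures.
From mathcomp Require Import all_boot all_order all_algebra.
From mathcomp Require Import zify.
From Stdlib Require Import ClassicalEpsilon Classical.
Set Implicit Arguments.
Unset Strict Implicit.
Unset Printing Implicit Defensive.
Import Order.TTheory GRing.Theory Num.Theory.
Local Open Scope ring_scope.
Notation mm M f := (@mmap _ _ M _ _ f).


Lemma aa0 (V : zmodType) (a : V) : a = a + a -> a = 0.
Proof. by move=> h; apply: (@addrI _ a); rewrite addr0 -h. Qed.

Section Gen.
Variables (k : fieldType) (C : kcat k).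

Lemma kfid_fob (F : kfun C) : F = kfid C -> forall x, fob F x = x.
Proof. by move=> ->. Qed.

Lemma kfid_hom0 (F : kfun C) : F = kfid C ->
  forall x y (f : Defs.Hom C x y), fhom F f = 0 -> f = 0.
Proof. by move=> ->. Qed.

Lemma kfid_inv (F : kfun C) : F = kfid C ->
  forall x y (f : Defs.Hom C x y), invertible (fhom F f) -> invertible f.
Proof. by move=> ->. Qed.

Lemma kfcomp1F (F : kfun C) : kfcomp (kfid C) F = F.
Proof. by case: F. Qed.

Lemma kfcompF1 (F : kfun C) : kfcomp F (kfid C) = F.
Proof. by case: F. Qed.

Lemma kfcompA (F1 F2 F3 : kfun C) :
  kfcomp F1 (kfcomp F2 F3) = kfcomp (kfcomp F1 F2) F3.
Proof. by []. Qed.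

Lemma kfinv_uniq (g g1 g2 : kfun C) :
  kfinverse g g1 -> kfinverse g g2 -> g1 = g2.
Proof.
move=> [h1 h1'] [h2 h2'].
by rewrite -(kfcompF1 g1) -h2 kfcompA h1' kfcomp1F.
Qed.

Lemma kfinv_sym (g g' : kfun C) : kfinverse g g' -> kfinverse g' g.
Proof. by case. Qed.

Lemma kfun_hom0 (F : kfun C) : is_kfunctor F ->
  forall x y, fhom F (0 : Defs.Hom C x y) = 0.
Proof.
move=> [lin _] x y.
have := lin x y 1 0 0; rewrite !scale1r addr0; exact: aa0.
Qed.

Lemma kfun_invertible (F : kfun C) : is_kfunctor F ->
  forall x y (f : Defs.Hom C x y), invertible f -> invertible (fhom F f).
Proof.
move=> [_ [Fid Fcomp]] x y f [g [h1 h2]].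
exists (fhom F g); split; by rewrite -Fcomp ?h1 ?h2 Fid.
Qed.

Lemma kfun_nontriv (F F' : kfun C) : is_kfunctor F' -> kfcomp F' F = kfid C ->
  forall x y, nontrivial (Defs.Hom C x y) -> nontrivial (Defs.Hom C (fob F x) (fob F y)).
Proof.
move=> hF' hc x y [f hf]; exists (fhom F f) => h0; apply: hf.
apply: (kfid_hom0 hc) => /=.
by rewrite h0 kfun_hom0.
Qed.

Lemma mmap0u (M : kmod C) : is_kmod M -> forall x y (f : Defs.Hom C x y),
  mm M f 0 = 0.
Proof.
move=> [lin _] x y f.
have := lin x y f 1 0 0; rewrite !scale1r addr0; exact: aa0.
Qed.

Lemma mmZ (M : kmod C) : is_kmod M -> forall x y (f : Defs.Hom C x y) a u,
  mm M f (a *: u) = a *: mm M f u.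
Proof.
move=> hM x y f a u; have [lin _] := hM.
by have := lin x y f a u 0; rewrite !addr0 mmap0u // addr0.
Qed.

Lemma mmap0f (M : kmod C) : is_kmod M -> forall x y (u : mob M y),
  mm M (0 : Defs.Hom C x y) u = 0.
Proof.
move=> [_ [lin _]] x y u.
have := lin x y 1 0 0 u; rewrite !scale1r addr0; exact: aa0.
Qed.

Lemma nat_lin0 (M N : kmod C) (phi : forall x, mob M x -> mob N x) :
  is_natural phi -> forall x, phi x 0 = 0.
Proof.
move=> [lin _] x.
have := lin x 1 0 0; rewrite !scale1r addr0; exact: aa0.
Qed.

Lemma mod_iso_refl (M : kmod C) : mod_iso M M.
Proof.
exists (fun x u => u); split; last by move=> x; exists id.
by split.
Qed.

Lemma mod_iso_kfid (M : kmod C) (F : kfun C) : F = kfid C -> mod_iso (twist M F) M.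
Proof. move=> ->; exact: mod_iso_refl. Qed.

Lemma mod_iso_trans (M N P : kmod C) : mod_iso M N -> mod_iso N P -> mod_iso M P.
Proof.
move=> [f [[fl fn] fb]] [g [[gl gn] gb]].
exists (fun x u => g x (f x u)); split; last first.
  by move=> x; apply: bij_comp.
split; first by move=> x a u v; rewrite fl gl.
by move=> x y h u; rewrite fn gn.
Qed.

Lemma mod_iso_sym (M N : kmod C) : mod_iso M N -> mod_iso N M.
Proof.
move=> [f [[fl fn] fb]].
pose g x (u : mob N x) := epsilon (inhabits (0 : mob M x)) (fun w => f x w = u).
have gK x u : f x (g x u) = u.
  rewrite /g; apply: (epsilon_spec (inhabits 0) (fun w => f x w = u)).
  case: (fb x) => h _ hK; by exists (h u); rewrite hK.
have fI x : injective (f x) by apply: bij_inj.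
exists g; split; last first.
  move=> x; exists (f x) => u; first exact: gK.
  by apply: fI; rewrite gK.
split.
  by move=> x a u v; apply: fI; rewrite fl !gK.
by move=> x y h u; apply: fI; rewrite fn !gK.
Qed.

Lemma mod_iso_twist (M N : kmod C) (F : kfun C) :
  mod_iso M N -> mod_iso (twist M F) (twist N F).
Proof.
move=> [f [[fl fn] fb]].
exists (fun x u => f (fob F x) u); split; last by move=> x; apply: fb.
split; first by move=> x a u v; rewrite fl.
by move=> x y h u /=; rewrite fn.
Qed.

Lemma mod_iso_supp (M N : kmod C) : mod_iso M N -> forall x, supp M x -> supp N x.
Proof.
move=> [f [hn fb]] x [u hu]; exists (f x u) => h0; apply: hu.
apply: (bij_inj (fb x)); by rewrite h0 (nat_lin0 hn).
Qed.

Lemma fixes_iso_inv (M : kmod C) (g g' : kfun C) :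
  kfinverse g g' -> mod_iso (twist M g') M -> mod_iso (twist M g) M.
Proof.
move=> [h1 h2] hi.
have := mod_iso_twist g hi => /= hi2.
apply: mod_iso_trans (mod_iso_sym hi2) _.
exact: (mod_iso_kfid M h2).
Qed.

End Gen.

Section Mx.
Variable k : fieldType.
Definition sm m (u : 'rV[k]_m) : k := \sum_(i < m) u 0 i.

Lemma rv0 m (u w : 'rV[k]_m) : m = 0%N -> u = w.
Proof. move=> hm; apply/matrixP=> i j; have : forall t, (t < m)%N -> False by rewrite hm. by move=> /(_ _ (ltn_ord j)). Qed.

Lemma rv_const m (u : 'rV[k]_m) : (m <= 1)%N -> u = const_mx (sm u).
Proof.
case: m u => [|[|//]] u _; first exact: rv0.
apply/matrixP=> i j; rewrite mxE /sm big_ord1.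
by rewrite !ord1.
Qed.

Lemma sm_const m (c : k) : sm (const_mx c : 'rV[k]_m) = m%:R * c.
Proof.
rewrite /sm (eq_bigr (fun _ => c)) ?sumr_const ?card_ord ?mulr_natl //.
by move=> i _; rewrite mxE.
Qed.

Lemma sm0 m : sm (0 : 'rV[k]_m) = 0.
Proof. by rewrite /sm big1 // => i _; rewrite mxE. Qed.

Lemma sm_lin m a (u w : 'rV[k]_m) : sm (a *: u + w) = a * sm u + sm w.
Proof.
rewrite /sm mulr_sumr -big_split /=; apply: eq_bigr => i _.
by rewrite !mxE.
Qed.

Lemma smZ m a (u : 'rV[k]_m) : sm (a *: u) = a * sm u.
Proof. by have := sm_lin a u 0; rewrite !addr0 sm0 addr0. Qed.

Lemma const_lin m a (c d : k) :
  (const_mx (a * c + d) : 'rV[k]_m) = a *: const_mx c + const_mx d.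
Proof. by apply/matrixP=> i j; rewrite !mxE. Qed.

Lemma rv_const_n m (u : 'rV[k]_m) : (m <= 1)%N -> const_mx (m%:R * sm u) = u.
Proof.
case: m u => [|[|//]] u _; first exact: rv0.
by rewrite mul1r -rv_const.
Qed.

Lemma scal_inj (V : lmodType k) (w : V) (a b : k) : w <> 0 -> a *: w = b *: w -> a = b.
Proof.
move=> hw h; apply/eqP; rewrite -subr_eq0; apply/eqP.
have: (a - b) *: w == 0 by rewrite scalerBl h subrr.
by rewrite scaler_eq0 => /orP [/eqP //| /eqP].
Qed.
End Mx.

Section Comp.
Variables (k : fieldType) (C : kcat k).
Lemma comp0l x y z (f : Defs.Hom C x y) : Defs.comp C (0 : Defs.Hom C y z) f = 0.
Proof.
have := @comp_linl _ C x y z 1 0 0 f; rewrite !scale1r addr0; exact: aa0.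
Qed.
Lemma comp0r x y z (g : Defs.Hom C y z) : Defs.comp C g (0 : Defs.Hom C x y) = 0.
Proof.
have := @comp_linr _ C x y z 1 g 0 0; rewrite !scale1r addr0; exact: aa0.
Qed.
Lemma compZl x y z a (g : Defs.Hom C y z) (f : Defs.Hom C x y) :
  Defs.comp C (a *: g) f = a *: Defs.comp C g f.
Proof. by have := @comp_linl _ C _ _ _ a g 0 f; rewrite !addr0 comp0l addr0. Qed.
Lemma compZr x y z a (g : Defs.Hom C y z) (f : Defs.Hom C x y) :
  Defs.comp C g (a *: f) = a *: Defs.comp C g f.
Proof. by have := @comp_linr _ C _ _ _ a g f 0; rewrite !addr0 comp0r addr0. Qed.

Lemma noninv_opp x y (f : Defs.Hom C x y) : ~ invertible f -> ~ invertible (- f).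
Proof.
move=> hf [g [h1 h2]]; apply: hf; exists (- g).
by rewrite -!scaleN1r compZl compZr -compZr -compZl !scaleN1r.
Qed.

Lemma res_uniq x (h : Defs.Hom C x x) (mu nu : k) : local_end x ->
  ~ invertible (h - mu *: idm C x) -> ~ invertible (h - nu *: idm C x) -> mu = nu.
Proof.
move=> [_ hloc] h1 h2; apply: NNPP => hne.
apply: (hloc _ _ h2 (noninv_opp h1)).
have -> : h - nu *: idm C x - (h - mu *: idm C x) = (mu - nu) *: idm C x.
  by rewrite opprB addrC addrA subrK scalerBl.
have hz : mu - nu != 0 by rewrite subr_eq0; apply/eqP.
exists ((mu - nu)^-1 *: idm C x).
by rewrite compZl compZr comp1m scalerA mulVf // scale1r
           compZl compZr comp1m scalerA mulfV // scale1r.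
Qed.
End Comp.

Section Free.
Variables (k : fieldType) (C : kcat k) (B : kmod C) (L : Ob C -> Prop) (x0 : Ob C).
Hypothesis hB : is_kmod B.
Hypothesis hdim : forall x, L x -> dim_one (mob B x).
Hypothesis hout : forall x, ~ L x -> forall u : mob B x, u = 0.
Hypothesis Lx0 : L x0.
Hypothesis hsep : forall z (f : Defs.Hom C x0 z) (g : Defs.Hom C z x0),
  z <> x0 -> L z -> f = 0 \/ g = 0.

Definition vB y : mob B y := epsilon (inhabits (0 : mob B y)) (fun u => u <> 0).
Definition nS y : nat := if excluded_middle_informative (y = x0) then 1%N else 0%N.
Definition rS y z (f : Defs.Hom C y z) : k :=
  if excluded_middle_informative (y = x0 /\ z = x0)
  then epsilon (inhabits 0) (fun mu => mm B f (vB z) = mu *: vB y) else 0.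
Definition Smod : kmod C :=
  @KMod _ _ (fun y => 'rV[k]_(nS y) : lmodType k)
    (fun y z f u => const_mx (rS f * sm u)).

Lemma vB_nz y : L y -> vB y <> 0.
Proof.
move=> Ly; rewrite /vB; apply: (epsilon_spec (inhabits 0) (fun u : mob B y => u <> 0)).
by case: (hdim Ly) => w [hw _]; exists w.
Qed.

Lemma dim_one_mul y (w u : mob B y) : L y -> w <> 0 -> exists a : k, u = a *: w.
Proof.
move=> Ly hw; case: (hdim Ly) => b [hb hall].
case: (hall w) => cw hcw; case: (hall u) => cu hcu.
have cw0 : cw != 0 by apply/eqP => c0; apply: hw; rewrite hcw c0 scale0r.
by exists (cu / cw); rewrite hcw scalerA divfK // hcu.
Qed.

Lemma rS_spec y z (f : Defs.Hom C y z) : y = x0 -> z = x0 -> mm B f (vB z) = rS f *: vB y.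
Proof.
move=> hy hz; rewrite /rS; destruct (excluded_middle_informative (y = x0 /\ z = x0)) as [ha|hn]; last by exfalso; apply: hn.
apply: (epsilon_spec (inhabits 0) (fun mu => mm B f (vB z) = mu *: vB y)).
apply: dim_one_mul; first by rewrite hy.
by apply: vB_nz; rewrite hy.
Qed.

Lemma rS_out y z (f : Defs.Hom C y z) : ~ (y = x0 /\ z = x0) -> rS f = 0.
Proof. by move=> h; rewrite /rS; case: excluded_middle_informative. Qed.

Lemma rS_eq y z (f : Defs.Hom C y z) mu : y = x0 -> z = x0 ->
  mm B f (vB z) = mu *: vB y -> rS f = mu.
Proof.
move=> hy hz h; apply: (@scal_inj _ _ (vB y)); first by apply: vB_nz; rewrite hy.
by rewrite -rS_spec // h.
Qed.

Lemma nS_le1 y : (nS y <= 1)%N.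
Proof. by rewrite /nS; case: excluded_middle_informative. Qed.
Lemma nS_in y : y = x0 -> nS y = 1%N.
Proof. by rewrite /nS; case: excluded_middle_informative. Qed.
Lemma nS_out y : y <> x0 -> nS y = 0%N.
Proof. by rewrite /nS; case: excluded_middle_informative. Qed.

Lemma Smod_kmod : is_kmod Smod.
Proof.
case: hB => Bl1 [Bl2 [Bid Bcomp]].
split.
  by move=> x y f a u w /=; rewrite sm_lin mulrDr mulrA [rS f * a]mulrC -mulrA const_lin.
split.
  move=> x y a f g u /=.
  have -> : rS (a *: f + g) = a * rS f + rS g.
    case: (excluded_middle_informative (x = x0 /\ y = x0)) => [[hx hy]|hn];
      last by rewrite !rS_out // mulr0 addr0.
    apply: rS_eq => //; rewrite Bl2 !rS_spec //.
    by rewrite scalerDl scalerA.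
  by rewrite mulrDl -mulrA const_lin.
split.
  move=> x u /=.
  case: (excluded_middle_informative (x = x0)) => hx.
    rewrite (@rS_eq _ _ _ 1); [|done|done|by rewrite Bid scale1r]. have e1 : forall c : k, 1 * c = c := @mul1r k. rewrite e1.
    by rewrite -rv_const ?nS_le1.
  by apply: rv0; rewrite nS_out.
move=> x y z g f u /=.
case: (excluded_middle_informative (x = x0)) => hx; last by apply: rv0; rewrite nS_out.
case: (excluded_middle_informative (y = x0)) => hy.
  case: (excluded_middle_informative (z = x0)) => hz.
    rewrite sm_const (nS_in hy) mul1r mulrA.
    congr (const_mx (_ * _)); apply: rS_eq => //.
    by rewrite Bcomp rS_spec // mmZ // rS_spec // scalerA mulrC.
  rewrite (rS_out (Defs.comp C g f)); last by case.
  by rewrite (@rv0 _ _ u 0 (nS_out hz)) sm0 !mulr0 sm_const !mulr0.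
rewrite sm_const (nS_out hy) mul0r mulr0.
case: (excluded_middle_informative (z = x0)) => hz; last first.
  by rewrite (rS_out (Defs.comp C g f)) ?mul0r //; case.
rewrite (@rS_eq _ _ (Defs.comp C g f) 0) ?mul0r //.
rewrite scale0r Bcomp.
subst x z.
case: (classic (L y)) => Ly.
  case: (hsep f g hy Ly) => ->; first by rewrite mmap0f.
  by rewrite mmap0f // mmap0u.
by rewrite (hout Ly (mm B g (vB x0))) mmap0u.
Qed.

Lemma const0 m : (const_mx 0 : 'rV[k]_m) = 0.
Proof. by apply/matrixP=> i j; rewrite !mxE. Qed.

Lemma const_scale m c : (const_mx c : 'rV[k]_m) = c *: const_mx 1.
Proof. by apply/matrixP=> i j; rewrite !mxE mulr1. Qed.

Lemma Smod_out y (u : mob Smod y) : y <> x0 -> u = 0.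
Proof. by move=> hy; apply: rv0; rewrite nS_out. Qed.

Lemma Smod_fin : fin_dim_mod Smod.
Proof.
split.
  move=> y; exists [:: const_mx 1] => v; exists (fun _ => sm v).
  rewrite big_ord1 /= -const_scale; exact: rv_const (nS_le1 y).
exists [:: x0] => y [u hu] /=; left.
by apply: NNPP => hy; apply: hu; apply: Smod_out => h; apply: hy.
Qed.

Lemma Smod_indec : indecomposable Smod.
Proof.
split.
  exists x0; exists (const_mx 1 : 'rV[k]_(nS x0)) => h0.
  have := congr1 (@sm _ _) h0; rewrite sm_const sm0 nS_in // mulr1.
  by move/eqP; rewrite oner_eq0.
move=> e he hid.
have e0 := nat_lin0 he.
have [elin _] := he.
have eS y (u : mob Smod y) : e y u = sm u *: e y (const_mx 1).
  rewrite {1}(rv_const u (nS_le1 y)) const_scale -[_ *: const_mx 1]addr0.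
  by rewrite elin e0 addr0.
set c := sm (e x0 (const_mx 1)).
have ec : e x0 (const_mx 1) = const_mx c.
  exact: rv_const (nS_le1 x0).
have cc : c * c = c.
  have := hid x0 (const_mx 1); rewrite ec (eS x0 (const_mx c)) ec => h.
  have := congr1 (@sm _ _) h; rewrite smZ !sm_const nS_in //.
  by rewrite !mul1r.
have : c * (c - 1) == 0 by rewrite mulrBr mulr1 cc subrr.
rewrite mulf_eq0 subr_eq0 => /orP [/eqP c0|/eqP c1].
  left => y u; case: (classic (y = x0)) => hy; last exact: Smod_out.
  subst y; by rewrite (eS x0 u) ec c0 const0 scaler0.
right => y u; case: (classic (y = x0)) => hy; last by rewrite (Smod_out (e y u) hy) (Smod_out u hy).
subst y; rewrite (eS x0 u) ec c1 -const_scale.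
exact/esym/rv_const/nS_le1.
Qed.

Lemma resA x (h : Defs.Hom C x x) mu : L x -> mm B h (vB x) = mu *: vB x ->
  ~ invertible (h - mu *: idm C x).
Proof.
move=> Lx hh [h2 [c1 c2]].
have [Bl1 [Bl2 [Bid Bcomp]]] := hB.
have hz : mm B (h - mu *: idm C x) (vB x) = 0.
  have -> : h - mu *: idm C x = (- mu) *: idm C x + h by rewrite addrC scaleNr.
  by rewrite Bl2 Bid hh scaleNr addNr.
apply: (vB_nz Lx).
by rewrite -[vB x]Bid -c2 Bcomp hz mmap0u.
Qed.

Hypothesis hloc0 : local_end x0.

Lemma Smod_fix (g g' : kfun C) : is_kfunctor g -> is_kfunctor g' ->
  kfinverse g g' -> fob g x0 = x0 -> mod_iso (twist Smod g') Smod.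
Proof.
move=> hg hg' [h1 h2] gx0.
have g'x0 : fob g' x0 = x0 by have := kfid_fob h2 x0; rewrite /= gx0.
have hgy y : fob g' y = x0 <-> y = x0.
  split => [h|->//]; by rewrite -(kfid_fob h1 y) /= h gx0.
have nSg y : nS (fob g' y) = nS y.
  case: (classic (y = x0)) => hy.
    by rewrite !nS_in // hgy.
  by rewrite !nS_out // => /hgy.
pose psi y (u : mob (twist Smod g') y) : mob Smod y := const_mx (sm (u : 'rV[k]_(nS (fob g' y)))).
exists psi; split; last first.
  move=> y; exists (fun u : mob Smod y => (const_mx (sm (u : 'rV[k]_(nS y))) : mob (twist Smod g') y)) => u.
    rewrite /psi /= sm_const (_ : (nS y)%:R = (nS (fob g' y))%:R :> k); last by rewrite nSg.
    by rewrite rv_const_n ?nS_le1.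
  rewrite /psi /= sm_const (_ : (nS (fob g' y))%:R = (nS y)%:R :> k); last by rewrite nSg.
  by rewrite rv_const_n ?nS_le1.
split.
  by move=> y a u w; rewrite /psi /= sm_lin const_lin.
move=> y z f u; rewrite /psi /= !sm_const nSg.
case: (classic (y = x0)) => hy; last by apply: rv0; rewrite nS_out.
case: (classic (z = x0)) => hz; last first.
  rewrite (rS_out f); last by case.
  rewrite (rS_out (fhom g' f)); last by case => _ /hgy.
  by rewrite !mul0r mulr0.
rewrite (nS_in hy) (nS_in hz) !mul1r.
congr const_mx; congr (_ * _).
subst y z.
have [g'l [g'id _]] := hg'.
apply: (@res_uniq _ _ _ (fhom g' f)).
- by rewrite g'x0.
- apply: resA; first by rewrite g'x0.
  by apply: rS_spec; rewrite g'x0.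
- move=> hinv; apply: (resA Lx0 (rS_spec f erefl erefl)).
  apply: (kfid_inv h1) => /=.
  apply: (kfun_invertible hg).
  have -> : f - rS f *: idm C x0 = (- rS f) *: idm C x0 + f by rewrite addrC scaleNr.
  by rewrite g'l g'id scaleNr addrC.
Qed.

End Free.

Lemma free_fix (k : fieldType) (C : kcat k) (B : kmod C) (L : Ob C -> Prop) (x0 : Ob C)
  (G : kfun C -> Prop) (g g' : kfun C) :
  is_kmod B -> (forall x, L x -> dim_one (mob B x)) ->
  (forall x, ~ L x -> forall u : mob B x, u = 0) -> L x0 ->
  (forall z (f : Defs.Hom C x0 z) (g : Defs.Hom C z x0), z <> x0 -> L z -> f = 0 \/ g = 0) ->
  local_end x0 -> acts_freely G -> G g ->
  is_kfunctor g -> is_kfunctor g' -> kfinverse g g' -> fob g x0 = x0 -> g = kfid C.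
Proof.
move=> hB hdim hout Lx0 hsep hloc hfree Gg hg hg' hinv gx0.
apply: NNPP => hne.
have hk : is_kmod (Smod B x0) := Smod_kmod hB hdim hout Lx0 hsep.
apply: (hfree (Smod B x0) hk (Smod_fin _ _) (Smod_indec _ _) g Gg hne).
exists g'; split => //.
exact: (Smod_fix hB hdim Lx0 hloc hg hg' hinv gx0).
Qed.

Lemma lpath_antisym o (i j : int) : i <> j -> lpath o i j -> lpath o j i -> False.
Proof.
move=> hij [[h1 h2]|[h1 h2]] [[h3 h4]|[h3 h4]].
- by apply: hij; lia.
- have hi : i < j by lia.
  by have := h2 i (lexx _) hi; rewrite h4 ?lexx.
- have hi : j < i by lia.
  by have := h2 j (lexx _) hi; rewrite h4 ?lexx.
- by apply: hij; lia.
Qed.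

Lemma lpath_between o (a b c : int) : lpath o a c -> lpath o c b ->
  (a <= c <= b) \/ (b <= c <= a).
Proof.
move=> [[h1 h2]|[h1 h2]] [[h3 h4]|[h3 h4]].
- by left; apply/andP; split.
- case: (ltP a c) => hac; last by right; apply/andP; split => //; lia.
  case: (ltP b c) => hbc; last by left; apply/andP; split => //; lia.
  have := h2 (c - 1); have := h4 (c - 1).
  move=> H1 H2; have e1 := H1 ltac:(lia) ltac:(lia); have e2 := H2 ltac:(lia) ltac:(lia).
  by rewrite e1 in e2.
- case: (ltP c a) => hac; last by left; apply/andP; split => //; lia.
  case: (ltP c b) => hbc; last by right; apply/andP; split => //; lia.
  have := h2 c; have := h4 c.
  move=> H1 H2; have e1 := H1 ltac:(lia) ltac:(lia); have e2 := H2 ltac:(lia) ltac:(lia).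
  by rewrite e1 in e2.
- by right; apply/andP; split.
Qed.

Lemma lpath_sub o (a b c : int) : lpath o a b -> (a <= c <= b) \/ (b <= c <= a) ->
  lpath o a c /\ lpath o c b.
Proof.
move=> [[h1 h2]|[h1 h2]] hc.
- have hc' : a <= c <= b by case: hc => /andP [? ?]; apply/andP; split; lia.
  move/andP: hc' => [ha hb].
  split; left; split => // t ht1 ht2; apply: h2; lia.
- have hc' : b <= c <= a by case: hc => /andP [? ?]; apply/andP; split; lia.
  move/andP: hc' => [ha hb].
  split; right; split => // t ht1 ht2; apply: h2; lia.
Qed.

Lemma lpath_adj o (i : int) : lpath o i (i + 1) \/ lpath o (i + 1) i.
Proof.
case ho: (o i).
  left; left; split; first lia.
  by move=> t h1 h2; have -> : t = i by lia.
right; right; split; first lia.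
by move=> t h1 h2; have -> : t = i by lia.
Qed.

Section Line.
Variables (k : fieldType) (C : kcat k) (L : Ob C -> Prop) (I : int -> Prop)
  (phi : int -> Ob C) (o : int -> bool).
Hypothesis hinj : forall i j, I i -> I j -> phi i = phi j -> i = j.
Hypothesis hL : forall x, L x <-> exists i, I i /\ phi i = x.
Hypothesis HR : forall i j, I i -> I j ->
  (nontrivial (Defs.Hom C (phi i) (phi j)) <-> lpath o i j).
Hypothesis Iconv : forall i j c, I i -> I j -> i <= c <= j -> I c.

Definition Rob (x y : Ob C) := nontrivial (Defs.Hom C x y).
Definition AdjOb x y := L x /\ L y /\ x <> y /\ (Rob x y \/ Rob y x) /\
  forall z, L z -> z <> x -> z <> y -> ~ (Rob x z /\ Rob z y) /\ ~ (Rob y z /\ Rob z x).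

Lemma adj_bwd i : I i -> I (i + 1) -> AdjOb (phi i) (phi (i + 1)).
Proof.
move=> Ii Ii1.
split; first by apply/hL; exists i.
split; first by apply/hL; exists (i + 1).
split; first by move=> /(hinj Ii Ii1); lia.
split.
  by case: (lpath_adj o i) => h; [left|right]; apply/HR.
move=> z /hL [c [Ic <-]] hci hci1.
have c1 : c <> i by move=> e; apply: hci; rewrite e.
have c2 : c <> i + 1 by move=> e; apply: hci1; rewrite e.
split.
  move=> [/(HR Ii Ic) h1 /(HR Ic Ii1) h2].
  by case: (lpath_between h1 h2) => /andP [? ?]; lia.
move=> [/(HR Ii1 Ic) h1 /(HR Ic Ii) h2].
by case: (lpath_between h1 h2) => /andP [? ?]; lia.
Qed.

Lemma adj_fwd i j : I i -> I j -> AdjOb (phi i) (phi j) -> j = i + 1 \/ i = j + 1.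
Proof.
move=> Ii Ij [_ [_ [hne [hr hall]]]].
have hij : i <> j by move=> e; apply: hne; rewrite e.
have key c : I c -> c <> i -> c <> j -> (i <= c <= j) \/ (j <= c <= i) -> False.
  move=> Ic ci cj hb.
  have pci : phi c <> phi i by move/(hinj Ic Ii).
  have pcj : phi c <> phi j by move/(hinj Ic Ij).
  have [h1 h2] := hall (phi c) (proj2 (hL _) (ex_intro _ c (conj Ic erefl))) pci pcj.
  case: hr => /(HR _ _) h.
    have [p1 p2] := lpath_sub (h Ii Ij) hb.
    by apply: h1; split; apply/HR.
  have hb' : (j <= c <= i) \/ (i <= c <= j) by case: hb; [right|left].
  have [p1 p2] := lpath_sub (h Ij Ii) hb'.
  by apply: h2; split; apply/HR.
apply: NNPP => hn.
case: (ltP i j) => hlt.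
  apply: (key (i + 1)).
  - apply: (Iconv Ii Ij); apply/andP; split; lia.
  - lia.
  - by move=> e; apply: hn; left.
  - left; apply/andP; split; lia.
apply: (key (i - 1)).
- apply: (Iconv Ij Ii); apply/andP; split; lia.
- lia.
- by move=> e; apply: hn; right; lia.
- right; apply/andP; split; lia.
Qed.


Lemma adj_pres (g g' : kfun C) : is_kfunctor g -> is_kfunctor g' -> kfinverse g g' ->
  (forall x, L x -> L (fob g x)) -> (forall x, L x -> L (fob g' x)) ->
  forall x y, AdjOb x y -> AdjOb (fob g x) (fob g y).
Proof.
move=> hg hg' [h1 h2] Lg Lg' x y [Lx [Ly [hne [hr hall]]]].
have Rg a b : Rob a b -> Rob (fob g a) (fob g b) by apply: (kfun_nontriv hg' h2).
have Rg' a b : Rob a b -> Rob (fob g' a) (fob g' b) by apply: (kfun_nontriv hg h1).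
have gg' a : fob g' (fob g a) = a := kfid_fob h2 a.
have g'g a : fob g (fob g' a) = a := kfid_fob h1 a.
split; first exact: Lg.
split; first exact: Lg.
split; first by move=> e; apply: hne; rewrite -(gg' x) e gg'.
split; first by case: hr => h; [left|right]; apply: Rg.
move=> z Lz zx zy.
have Lz' := Lg' _ Lz.
have zx' : fob g' z <> x by move=> e; apply: zx; rewrite -e g'g.
have zy' : fob g' z <> y by move=> e; apply: zy; rewrite -e g'g.
have [n1 n2] := hall _ Lz' zx' zy'.
split => [[a b]|[a b]].
  apply: n1; split; [have := Rg' _ _ a | have := Rg' _ _ b]; by rewrite gg'.
apply: n2; split; [have := Rg' _ _ a | have := Rg' _ _ b]; by rewrite gg'.
Qed.

Lemma sigma_ex (g g' : kfun C) : kfinverse g g' ->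
  (forall x, L x -> L (fob g x)) ->
  exists sg : int -> int, (forall i, I i -> I (sg i) /\ fob g (phi i) = phi (sg i)) /\
     (forall i j, I i -> I j -> sg i = sg j -> i = j).
Proof.
move=> [h1 h2] Lg.
have hs i : exists j, I i -> I j /\ fob g (phi i) = phi j.
  case: (classic (I i)) => Ii; last by exists 0.
  have : L (fob g (phi i)) by apply: Lg; apply/hL; exists i.
  by move/hL => [j [Ij e]]; exists j.
pose sg i := proj1_sig (constructive_indefinite_description _ (hs i)).
have sgP i : I i -> I (sg i) /\ fob g (phi i) = phi (sg i).
  exact: (proj2_sig (constructive_indefinite_description _ (hs i))).
exists sg; split => // i j Ii Ij e.
apply: hinj => //.
rewrite -(kfid_fob h2 (phi i)) -(kfid_fob h2 (phi j)) /=.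
by rewrite (proj2 (sgP _ Ii)) (proj2 (sgP _ Ij)) e.
Qed.

End Line.

Lemma rigid_up (sg : int -> int) :
  (forall i : int, 0 <= i -> sg (i + 1) = sg i + 1 \/ sg (i + 1) = sg i - 1) ->
  (forall i j : int, 0 <= i -> 0 <= j -> sg i = sg j -> i = j) ->
  exists2 eps : int, (eps = 1 \/ eps = -1) & forall n : nat, sg n = sg 0 + eps * n.
Proof.
move=> hadj hinj.
pose eps : int := sg (0 + 1) - sg 0.
have heps : eps = 1 \/ eps = -1.
  have h0 : sg (0 + 1) = sg 0 + 1 \/ sg (0 + 1) = sg 0 - 1 := hadj 0 (lexx 0).
  by rewrite /eps; case: h0 => ->; [left|right]; lia.
exists eps => //.
suff H : forall n : nat, sg (n%:Z + 1) = sg n + eps /\ sg n = sg 0 + eps * n.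
  by move=> n; case: (H n).
elim=> [|n [IH1 IH2]].
  split; first by rewrite /eps [in RHS]addrC subrK.
  by rewrite mulr0 addr0.
have E : (n.+1 : int) = n%:Z + 1 by lia.
rewrite E.
split; last by case: heps => he; rewrite he in IH1 IH2 *; lia.
have n0 : 0 <= n%:Z + 1 by lia.
case: (hadj (n%:Z + 1) n0) => h; case: heps => he; rewrite he in IH1 h *; try lia.
- have := hinj (n%:Z + 1 + 1) n ltac:(lia) ltac:(lia) ltac:(lia); lia.
- have := hinj (n%:Z + 1 + 1) n ltac:(lia) ltac:(lia) ltac:(lia); lia.
Qed.

Lemma rigid_Z (sg : int -> int) :
  (forall i : int, sg (i + 1) = sg i + 1 \/ sg (i + 1) = sg i - 1) ->
  (forall i j : int, sg i = sg j -> i = j) ->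
  exists2 eps : int, (eps = 1 \/ eps = -1) & forall i, sg i = sg 0 + eps * i.
Proof.
move=> hadj hinj.
have [e1 he1 H1] := rigid_up (fun i _ => hadj i) (fun i j _ _ => hinj i j).
pose tau i := sg (- i).
have tadj (i : int) : 0 <= i -> tau (i + 1) = tau i + 1 \/ tau (i + 1) = tau i - 1.
  move=> _; rewrite /tau.
  have := hadj (- (i + 1)); rewrite (_ : - (i + 1) + 1 = - i); last by lia.
  move=> [h|h]; lia.
have tinj (i j : int) : 0 <= i -> 0 <= j -> tau i = tau j -> i = j.
  by move=> _ _ /hinj; lia.
have [e2 he2 H2] := rigid_up tadj tinj.
have s1 : sg 1 = sg 0 + e1 * 1 := H1 1%N.
have s2 : sg (- 1) = sg (- 0) + e2 * 1 := H2 1%N.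
rewrite oppr0 in s2.
have he : e2 = - e1.
  have := hinj 1 (-1).
  case: he1 => h1; case: he2 => h2; rewrite h1 h2 in s1 s2 *; set a0 := sg 0 in s1 s2 *; set a1 := sg 1 in s1 s2 *; set am := sg (-1) in s1 s2 *; lia.
exists e1 => // i.
case: i => n; first exact: H1.
have := H2 n.+1; rewrite /tau oppr0 he NegzE.
by move=> ->; rewrite mulrN mulNr.
Qed.

Lemma min_ex (P : nat -> Prop) n : P n -> exists d, P d /\ forall m, P m -> (d <= m)%N.
Proof.
move=> Pn; apply: NNPP => hno.
suff H : forall N m, (m <= N)%N -> ~ P m by exact: (H n n (leqnn n) Pn).
elim=> [|N IH] m hm Pm.
  apply: hno; exists m; split => // m' _; move: hm; rewrite leqn0 => /eqP ->.
  by [].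
case: (leqP m N) => hmN; first exact: (IH m hmN Pm).
apply: hno; exists m; split => // m' Pm'.
case: (leqP m m') => // hlt.
have : (m' <= N)%N by lia.
by move=> h; case: (IH m' h Pm').
Qed.

Section Stab.
Variables (k : fieldType) (C : kcat k) (G : kfun C -> Prop) (B : kmod C).
Hypothesis hG : auto_group G.

Lemma stab_inv g : stab G B g -> exists g', stab G B g' /\ kfinverse g g'.
Proof.
move=> [Gg [g'' [hi'' iso]]].
have [_ [_ [Ginv _]]] := hG.
have [g' [Gg' hi']] := Ginv g Gg.
have e := kfinv_uniq hi' hi''; subst g''.
exists g'; split => //; split => //.
exists g; split; first exact: kfinv_sym.
exact: fixes_iso_inv hi' iso.
Qed.

Lemma stab_comp g1 g2 : stab G B g1 -> stab G B g2 -> stab G B (kfcomp g1 g2).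
Proof.
move=> [Gg1 [g1' [[a1 b1] iso1]]] [Gg2 [g2' [[a2 b2] iso2]]].
have [_ [Gc _]] := hG.
split; first exact: Gc.
exists (kfcomp g2' g1'); split.
  split.
    by rewrite -kfcompA (kfcompA g2 g2' g1') a2 kfcomp1F a1.
  by rewrite -kfcompA (kfcompA g1' g1 g2) b1 kfcomp1F b2.
exact: (mod_iso_trans (mod_iso_twist g1' iso2) iso1).
Qed.

Lemma stab_id : stab G B (kfid C).
Proof.
have [G1 _] := hG.
split => //; exists (kfid C); split; first by split.
exact: mod_iso_kfid.
Qed.

Lemma stab_L (L : Ob C -> Prop) : (forall x, supp B x <-> L x) ->
  forall g, stab G B g -> forall x, L x -> L (fob g x).
Proof.
move=> hsupp g [Gg [g' [hi iso]]] x /hsupp Lx; apply/hsupp.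
have iso2 := mod_iso_sym (fixes_iso_inv hi iso).
exact: (mod_iso_supp iso2 Lx).
Qed.

Lemma stab_fun g : stab G B g -> is_kfunctor g.
Proof. by case: hG => _ [_ [_ Gf]] [Gg _]; apply: Gf. Qed.
End Stab.

Section LineG.
Variables (k : fieldType) (C : kcat k) (L : Ob C -> Prop) (I : int -> Prop)
  (phi : int -> Ob C) (o : int -> bool) (G : kfun C -> Prop) (B : kmod C).
Hypothesis hinj : forall i j, I i -> I j -> phi i = phi j -> i = j.
Hypothesis hL : forall x, L x <-> exists i, I i /\ phi i = x.
Hypothesis HR : forall i j, I i -> I j ->
  (nontrivial (Defs.Hom C (phi i) (phi j)) <-> lpath o i j).
Hypothesis Iconv : forall i j c, I i -> I j -> i <= c <= j -> I c.
Hypothesis hG : auto_group G.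
Hypothesis hsupp : forall x, supp B x <-> L x.
Hypothesis hfix : forall g, G g -> forall i, I i -> fob g (phi i) = phi i -> g = kfid C.

Lemma sg_setup g : stab G B g -> exists g' (sg : int -> int),
  stab G B g' /\ kfinverse g g' /\
  (forall i, I i -> I (sg i) /\ fob g (phi i) = phi (sg i)) /\
  (forall i j, I i -> I j -> sg i = sg j -> i = j) /\
  (forall i : int, I i -> I (i + 1) -> sg (i + 1) = sg i + 1 \/ sg (i + 1) = sg i - 1).
Proof.
move=> Hg.
have [g' [Hg' hi]] := stab_inv hG Hg.
have Lg := stab_L hsupp Hg.
have Lg' := stab_L hsupp Hg'.
have [sg [sgP sgI]] := sigma_ex hinj hL hi Lg.
exists g', sg; do 4! (split => //).
move=> i Ii Ii1.
have A : AdjOb L (phi i) (phi (i + 1)) := adj_bwd hinj hL HR Ii Ii1.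
have A2 := adj_pres (stab_fun hG Hg) (stab_fun hG Hg') hi Lg Lg' A.
rewrite (proj2 (sgP _ Ii)) (proj2 (sgP _ Ii1)) in A2.
case: (adj_fwd hinj hL HR Iconv (proj1 (sgP _ Ii)) (proj1 (sgP _ Ii1)) A2) => h.
  by left.
by right; rewrite h addrK.
Qed.

Lemma Rob_pres g g' : stab G B g -> stab G B g' -> kfinverse g g' ->
  forall x y, Rob x y -> Rob (fob g x) (fob g y).
Proof.
move=> Hg Hg' [h1 h2] x y; exact: (kfun_nontriv (stab_fun hG Hg') h2).
Qed.

Lemma Zcase g : (forall i, I i) -> stab G B g -> exists t, forall i, fob g (phi i) = phi (i + t).
Proof.
move=> HI Hg.
have [g' [sg [Hg' [hi [sgP [sgI sgA]]]]]] := sg_setup Hg.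
have [eps heps Hs] := rigid_Z (fun i => sgA i (HI i) (HI (i + 1))) (fun i j => sgI i j (HI i) (HI j)).
have gP i : fob g (phi i) = phi (sg i) := proj2 (sgP i (HI i)).
case: heps => he; rewrite he in Hs.
  exists (sg 0) => i; rewrite gP Hs mul1r addrC //.
exfalso.
set c := sg 0 in Hs.
have [m hm] : exists m : int, c = m + m \/ c = m + m + 1.
  exists (c %/ 2)%Z.
  have h1 := divz_eq c 2.
  have h2 : 0 <= (c %% 2)%Z by apply: modz_ge0.
  have h3 : (c %% 2)%Z < 2 by apply: ltz_pmod.
  set q := (c %/ 2)%Z in h1 *; set r := (c %% 2)%Z in h1 h2 h3.
  lia.
case: hm => hm.
  have hsm : sg m = m by rewrite Hs hm; lia.
  have g1 : g = kfid C.
    apply: (hfix (proj1 Hg) (HI m)); by rewrite gP hsm.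
  have := gP (m + 1); rewrite g1 /= Hs => /(hinj (HI _) (HI _)).
  rewrite hm; lia.
have hs1 : sg m = m + 1 by rewrite Hs hm; lia.
have hs2 : sg (m + 1) = m by rewrite Hs hm; lia.
have Rg := Rob_pres Hg Hg' hi.
case: (lpath_adj o m) => hp.
  have := Rg _ _ (proj2 (HR (HI m) (HI (m + 1))) hp).
  rewrite !gP hs1 hs2 => /(HR (HI _) (HI _)) hq.
  by apply: (lpath_antisym (o := o) (i := m) (j := m + 1)) => //; lia.
have := Rg _ _ (proj2 (HR (HI (m + 1)) (HI m)) hp).
rewrite !gP hs1 hs2 => /(HR (HI _) (HI _)) hq.
by apply: (lpath_antisym (o := o) (i := m) (j := m + 1)) => //; lia.
Qed.

Lemma Ncase g : (forall i, I i <-> 0 <= i) -> stab G B g -> g = kfid C.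
Proof.
move=> HI Hg.
have [g' [sg [Hg' [hi [sgP [sgI sgA]]]]]] := sg_setup Hg.
have [eps heps Hs] := rigid_up (fun i hi => sgA i (proj2 (HI i) hi) (proj2 (HI (i + 1)) ltac:(lia)))
   (fun i j hi hj => sgI i j (proj2 (HI i) hi) (proj2 (HI j) hj)).
have I0 : I 0 by apply/HI.
have s0 : 0 <= sg 0 by apply/HI; exact: (proj1 (sgP 0 I0)).
case: heps => he; rewrite he in Hs; last first.
  exfalso.
  case E: (sg 0) s0 => [m|m] s0; last by lia.
  have In : I (Posz m.+1) by apply/HI.
  have := proj1 (sgP _ In); rewrite Hs E => /HI; lia.
have [g'' [tau [_ [hi' [tauP _]]]]] := sg_setup Hg'.
have e := kfinv_uniq (kfinv_sym hi) hi'; subst g''.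
have [t0 ht0] := tauP 0 I0.
have := HI (tau 0) => /proj1 /(_ t0) ht.
case E: (tau 0) ht ht0 => [j|j] ht ht0; last by lia.
have hgg : fob g (fob g' (phi 0)) = phi 0 := kfid_fob (proj1 hi) (phi 0).
rewrite ht0 (proj2 (sgP _ (proj2 (HI _) ht))) Hs in hgg.
have hpos : 0 <= sg 0 + 1 * (Posz j) by rewrite mul1r; apply: addr_ge0.
have hj := hinj (proj2 (HI _) hpos) I0 hgg.
have sz : sg 0 = 0.
  move: hj s0; rewrite mul1r; set a := sg 0; lia.
apply: (hfix (proj1 Hg) I0).
by rewrite (proj2 (sgP _ I0)) sz.
Qed.
End LineG.

Unset Implicit Arguments.
Theorem lemma3p3 (k : closedFieldType) (C : kcat k)
  (G : kfun C -> Prop) (L : Ob C -> Prop) (B : kmod C) :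
  locally_bounded C -> connected_cat C ->
  auto_group G -> acts_freely G ->
  is_line L -> is_B_of_line L B ->
  weakly_G_periodic G B ->
  iso_to_Z (stab G B).
Proof.
move=> [hloc _] _ hG hfree [_ [I [phi [o [e [hI [hinj [hL [hpath [hnopath _]]]]]]]]]]
  [hB [hdim [hout _]]] [_ [_ [_ [hinf [s hs]]]]].
have hsupp : forall x, supp B x <-> L x.
  move=> x; split => [hx|Lx].
    apply: NNPP => nL; case: hx => u hu; apply: hu; exact: hout.
  by case: (hdim x Lx) => w [hw _]; exists w.
have HR : forall i j, I i -> I j ->
    (nontrivial (Defs.Hom C (phi i) (phi j)) <-> lpath o i j).
  move=> i j Ii Ij; split.
    move=> [f hf]; apply: NNPP => np; apply: hf; exact: hnopath.
  by move=> hp; exists (e i j); exact: (proj1 (hpath i j Ii Ij hp)).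
have hsep : forall i0, I i0 -> forall z (f : Defs.Hom C (phi i0) z) (g : Defs.Hom C z (phi i0)),
    z <> phi i0 -> L z -> f = 0 \/ g = 0.
  move=> i0 Ii0 z f g hz /hL [j [Ij ej]]; subst z.
  have hij : i0 <> j by move=> e0; apply: hz; rewrite e0.
  case: (classic (lpath o i0 j)) => hp.
    right; apply: hnopath => // hq; exact: (lpath_antisym hij hp hq).
  by left; apply: hnopath.
have hfix : forall g, G g -> forall i, I i -> fob g (phi i) = phi i -> g = kfid C.
  move=> g Gg i Ii gi.
  have [_ [_ [Ginv Gf]]] := hG.
  have [g' [Gg' hi]] := Ginv g Gg.
  have Li : L (phi i) by apply/hL; exists i.
  exact: (free_fix hB hdim hout Li (hsep i Ii) (hloc (phi i)) hfree Gg (Gf _ Gg) (Gf _ Gg') hi gi).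
have Hnt : ~ (forall g, stab G B g -> g = kfid C).
  move=> hall; apply: hinf; exists s => x hx.
  have [y [ys [g [Hg gy]]]] := hs x hx.
  by rewrite -gy (hall g Hg).
case: hI => [[n [n0 HI]] | [HI | HI]].
- exfalso; apply: hinf.
  exists (List.map (fun m => phi (Posz m)) (List.seq 0 n)) => x /hsupp /hL [i [Ii <-]].
  have := proj1 (HI i) Ii => /andP [h1 h2].
  case: i Ii h1 h2 => [m|m] Ii h1 h2; last by lia.
  apply: List.in_map; apply/List.in_seq; lia.
- exfalso; apply: Hnt => g Hg.
  apply: (Ncase hinj hL HR _ hG hsupp hfix HI Hg).
  move=> i j c /HI hi /HI hj /andP [hc1 hc2]; apply/HI; lia.
have Iconv : forall i j c, I i -> I j -> i <= c <= j -> I c by move=> *; apply: HI.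
pose T g (t : int) := forall i, fob g (phi i) = phi (i + t).
have Zc : forall g, stab G B g -> exists t, T g t.
  move=> g Hg; exact: (Zcase hinj hL HR Iconv hG hsupp hfix HI Hg).
have Tuniq : forall g a b, T g a -> T g b -> a = b.
  move=> g a b ha hb; have := ha 0; rewrite hb => /(hinj _ _ (HI _) (HI _)).
  by rewrite !add0r => ->.
have Tcomp : forall g1 g2 a b, T g1 a -> T g2 b -> T (kfcomp g1 g2) (a + b).
  move=> g1 g2 a b ha hb i /=; rewrite hb ha.
  by rewrite -addrA (addrC b).
have Tid : T (kfid C) 0 by move=> i /=; rewrite addr0.
have Tkf : forall g, stab G B g -> T g 0 -> g = kfid C.
  move=> g Hg h0; apply: (hfix _ (proj1 Hg) _ (HI 0)); by rewrite h0 addr0.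
have Tinv : forall g g' t, stab G B g -> stab G B g' -> kfinverse g g' -> T g t -> T g' (- t).
  move=> g g' t Hg Hg' hi ht; have [t' ht'] := Zc g' Hg'.
  have h := Tcomp _ _ _ _ ht ht'; rewrite (proj1 hi) in h.
  have e0 := Tuniq _ _ _ h Tid.
  have -> : - t = t' by move: e0; set a := t; set b := t'; lia.
  exact: ht'.
have Hex : exists dd : nat, exists g, stab G B g /\ (0 < dd)%N /\ T g dd.
  apply: NNPP => hno; apply: Hnt => g Hg.
  have [t ht] := Zc g Hg.
  case: t ht => [m|m] ht.
    case: m ht => [|m] ht; first by apply: Tkf.
    by exfalso; apply: hno; exists m.+1, g.
  have [g' [Hg' hi]] := stab_inv hG Hg.
  exfalso; apply: hno; exists m.+1, g'; split => //; split => //.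
  by have := Tinv _ _ _ Hg Hg' hi ht; rewrite NegzE opprK.
have [d0 P0] := Hex.
have [d [[g1 [Hg1 [hd Tg1]]] dmin]] :=
  min_ex (P := fun dd : nat => exists g, stab G B g /\ (0 < dd)%N /\ T g dd) P0.
have [h' [Hh' hi]] := stab_inv hG Hg1.
have Th' : T h' (- (d%:Z)) := Tinv _ _ _ Hg1 Hh' hi Tg1.
have Hpow : forall g tg, stab G B g -> T g tg -> forall m : nat,
    stab G B (iter m (kfcomp g) (kfid C)) /\ T (iter m (kfcomp g) (kfid C)) (m%:Z * tg).
  move=> g tg Hg Tg; elim=> [|m [IH1 IH2]] /=.
    by split; [exact: stab_id | rewrite mul0r].
  split; first exact: stab_comp.
  have := Tcomp _ _ _ _ Tg IH2.
  by rewrite (_ : tg + m%:Z * tg = m.+1%:Z * tg) // -addn1 PoszD mulrDl mul1r addrC.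
have Hkp : forall n : int, stab G B (kfpow g1 h' n) /\ T (kfpow g1 h' n) (n * d).
  case=> m /=; first exact: (Hpow g1 d Hg1 Tg1 m).
  have [A1 A2] := Hpow h' _ Hh' Th' m.+1.
  split => //.
  by rewrite NegzE mulNr -mulrN.
have dnz : (d%:Z) != 0 by rewrite eqz_nat -lt0n.
exists g1, h'; split => //; split => //; split.
  move=> n m e0.
  have [_ Tn] := Hkp n; have [_ Tm] := Hkp m.
  rewrite e0 in Tn.
  exact: (mulIf dnz (Tuniq _ _ _ Tn Tm)).
split; first by move=> n; exact: (proj1 (Hkp n)).
move=> g Hg; have [t Tt] := Zc g Hg.
set q := (t %/ d)%Z; set r := (t %% d)%Z.
have r0 : 0 <= r := modz_ge0 _ dnz.
have r1 : r < d by apply: ltz_pmod; rewrite ltz_nat.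
have ht : t = q * d + r := divz_eq t d.
have HX : stab G B (kfcomp g (kfpow g1 h' (- q))) by apply: stab_comp => //; exact: (proj1 (Hkp _)).
have TX := Tcomp _ _ _ _ Tt (proj2 (Hkp (- q))).
have hr : t + (- q) * d%:Z = r by rewrite {1}ht mulNr addrAC subrr add0r.
rewrite hr in TX.
have rz : r = 0.
  apply: NNPP => rnz.
  clear ht hr; clearbody r; move: r0 r1 rnz TX; case: r => [rn|rn] r0' r1' rnz TX; last by move: r0'; rewrite NegzE; lia.
  have rpos : (0 < rn)%N.
    by case: rn {r0' r1' TX} rnz => [|rn'] rnz //; exfalso; exact: rnz.
  have := dmin rn (ex_intro _ _ (conj HX (conj rpos TX))).
  move: r1'; rewrite ltz_nat; lia.
rewrite rz in TX.
have X1 := Tkf _ HX TX.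
have Y : kfcomp (kfpow g1 h' (- q)) (kfpow g1 h' q) = kfid C.
  apply: Tkf; first by apply: stab_comp => //; exact: (proj1 (Hkp _)).
  have := Tcomp _ _ _ _ (proj2 (Hkp (- q))) (proj2 (Hkp q)).
  by rewrite mulNr addNr.
exists q.
by rewrite -(kfcompF1 g) -Y kfcompA X1 kfcomp1F.
Qed.
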